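(* Under the hypotheses of Theorem 2 (stated in the context), every limit point of the trial sequence $\{x^q\}$ generated by PLT is a global minimizer of $f$ on $[0,1]$.
   Context: Algorithm PLT (parallel information algorithm with local tuning) for minimizing $f$ on $[0,1]$; parameters: integer $N\ge1$, reliability parameter $r>1$, small number $\xi>0$. A ''trial'' is an evaluation of $f$ at a point. Step 0: perform $q(1)>1$ initial trials at $x^1=0$, $x^2=1$ and some interior points $x^3,\dots,x^{q(1)}\in(0,1)$; set $l=1$. At iteration $l$, let $q=q(l)$ be the number of trials made so far. Step 1: order all trial points as $0=x_1<x_2<\dots<x_q=1$ and set $z_i=f(x_i)$. Step 2: for $2\le j\le q$ compute $\mu_j=\max\{\lambda_j,\gamma_j,\xi\}$, where $\lambda_j=\max\{|z_i-z_{i-1}|/(x_i-x_{i-1})^{1/N}: i\in I_j\}$ with $I_2=\{2,3\}$, $I_j=\{j-1,j,j+1\}$ for $3\le j\le q-1$, $I_q=\{q-1,q\}$; and $\gamma_j=\mu\,(x_j-x_{j-1})^{1/N}/(X^{\max})^{1/N}$ with $\mu=\max\{|z_i-z_{i-1}|/(x_i-x_{i-1})^{1/N}:2\le i\le q\}$ and $X^{\max}=\max\{x_i-x_{i-1}:2\le i\le q\}$. Step 3: for $2\le j\le q$ compute the characteristic $R(j)=r\mu_j(x_j-x_{j-1})^{1/N}+\frac{(z_j-z_{j-1})^2}{r\mu_j(x_j-x_{j-1})^{1/N}}-(z_j+z_{j-1})$. Step 4: choose $p=p(l+1)\le q(l)-1$ and distinct indices $t_1,\dots,t_p$ being the indices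 of the $p$ largest characteristics ($t_1=\arg\max\{R(i):1<i\le q\}$, $t_k=\arg\max\{R(i):1<i\le q,\ i\ne t_s, 1\le s\le k-1\}$); the new trial points are $x^{q+k}=\tfrac12(x_{t_k-1}+x_{t_k})-\frac{1}{2r}\left(\frac{|z_{t_k}-z_{t_k-1}|}{\mu_{t_k}}\right)^N\operatorname{sign}(z_{t_k}-z_{t_k-1})$, $1\le k\le p$. Step 5: evaluate $f$ at these $p$ points in parallel, set $q(l+1)=q(l)+p(l+1)$, $l\leftarrow l+1$, and return to Step 1. Hypotheses of Theorem 2: $f:[0,1]\to\mathbb R$ satisfies $|f(x')-f(x'')|\le H|x'-x''|^{1/N}$; PLT runs indefinitely (stopping rule disregarded) producing trial points $\{x^q\}$; $p(l)\le Q<\infty$ for all $l>1$; $x^*$ is a global minimizer of $f$; for each iteration $l$, $j=j(l)$ indexes an interval $[x_{j-1},x_j]$ containing $x^*$, with $K_j=\max\{(z_{j-1}-f(x^* ))(x^*-x_{j-1})^{-1/N},(z_j-f(x^* ))(x_j-x^* )^{-1/N}\}$ and $M_j=|z_{j-1}-z_j|(x_j-x_{j-1})^{-1/N}$; and there is an infinite set of iteration numbers $\{h\}$ such that for all $l\in\{h\}$, $4^{1-1/N}K_j^2\ge M_j^2$ and $r\mu_j\ge 2^{1-1/N}K_j+(4^{1-1/N}K_j^2-M_j^2)^{1/2}$. *)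

(* Defs.v *)
From Stdlib Require Import Reals Lra Lia Arith List.
Import ListNotations.
Open Scope R_scope.

(* a^(1/N) for a > 0; 0 otherwise (so 0^(1/N) = 0). *)
Definition rt (N : nat) (a : R) : R :=
  if Rlt_dec 0 a then Rpower a (/ INR N) else 0.

Definition sgn (a : R) : R :=
  if Rlt_dec 0 a then 1 else if Rlt_dec a 0 then -1 else 0.

(* maximum of a finite list of nonnegative reals (0 for the empty list) *)
Definition maxl (l : list R) : R := fold_right Rmax 0 l.

(* indices 2..q of the intervals [x_{i-1}, x_i] *)
Definition idx (q : nat) : list nat := seq 2 (q - 1).

(* In what follows, x : nat -> R is the ordered list x_1 < ... < x_q of
   trial points at the current iteration (1-indexed), and z_i = f (x i). *)

Definition slope (N : nat) (f : R -> R) (x : nat -> R) (i : nat) : R :=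
  Rabs (f (x i) - f (x (i - 1)%nat)) / rt N (x i - x (i - 1)%nat).

Definition Iset (q j : nat) : list nat :=
  filter (fun i => andb (Nat.leb (j - 1) i) (Nat.leb i (j + 1))) (idx q).

Definition lam (N : nat) (f : R -> R) (x : nat -> R) (q j : nat) : R :=
  maxl (map (slope N f x) (Iset q j)).

Definition mu_all (N : nat) (f : R -> R) (x : nat -> R) (q : nat) : R :=
  maxl (map (slope N f x) (idx q)).

Definition Xmax (x : nat -> R) (q : nat) : R :=
  maxl (map (fun i => x i - x (i - 1)%nat) (idx q)).

Definition gam (N : nat) (f : R -> R) (x : nat -> R) (q j : nat) : R :=
  mu_all N f x q * rt N (x j - x (j - 1)%nat) / rt N (Xmax x q).

Definition muj (N : nat) (xi : R) (f : R -> R) (x : nat -> R) (q j : nat) : R :=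
  Rmax (Rmax (lam N f x q j) (gam N f x q j)) xi.

Definition charR (N : nat) (r xi : R) (f : R -> R) (x : nat -> R) (q j : nat) : R :=
  let m := muj N xi f x q j in
  let d := rt N (x j - x (j - 1)%nat) in
  r * m * d + (f (x j) - f (x (j - 1)%nat)) ^ 2 / (r * m * d)
  - (f (x j) + f (x (j - 1)%nat)).

Definition newpt (N : nat) (r xi : R) (f : R -> R) (x : nat -> R) (q t : nat) : R :=
  (x (t - 1)%nat + x t) / 2
  - / (2 * r) * (Rabs (f (x t) - f (x (t - 1)%nat)) / muj N xi f x q t) ^ N
    * sgn (f (x t) - f (x (t - 1)%nat)).

(* An infinite run of PLT (stopping rule disregarded).
   xt k  = trial point x^k (k >= 1);
   q l   = q(l), number of trials made before iteration l (l >= 1);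
   p l   = p(l), number of new trials made at step l-1 -> l (l > 1);
   xs l i = i-th smallest trial point x_i at iteration l (1 <= i <= q l);
   t l k = index t_k chosen at iteration l (1 <= k <= p (l+1)). *)
Definition PLT_run (f : R -> R) (N : nat) (r xi : R) (xt : nat -> R)
    (q p : nat -> nat) (xs : nat -> nat -> R) (t : nat -> nat -> nat) : Prop :=
  (1 < q 1)%nat /\ xt 1%nat = 0 /\ xt 2%nat = 1 /\
  (forall k, (3 <= k <= q 1)%nat -> 0 < xt k < 1) /\
  forall l, (1 <= l)%nat ->
    (forall i, (1 <= i < q l)%nat -> xs l i < xs l (S i)) /\
    (forall i, (1 <= i <= q l)%nat -> exists k, (1 <= k <= q l)%nat /\ xs l i = xt k) /\
    (forall k, (1 <= k <= q l)%nat -> exists i, (1 <= i <= q l)%nat /\ xs l i = xt k) /\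
    (* Step 4: choice of the p(l+1) largest characteristics *)
    (1 <= p (S l) <= q l - 1)%nat /\
    (forall k, (1 <= k <= p (S l))%nat -> (2 <= t l k <= q l)%nat) /\
    (forall k k', (1 <= k <= p (S l))%nat -> (1 <= k' <= p (S l))%nat ->
       t l k = t l k' -> k = k') /\
    (forall k k', (1 <= k)%nat -> (k < k')%nat -> (k' <= p (S l))%nat ->
       charR N r xi f (xs l) (q l) (t l k') <= charR N r xi f (xs l) (q l) (t l k)) /\
    (forall k j, (1 <= k <= p (S l))%nat -> (2 <= j <= q l)%nat ->
       (forall k', (1 <= k' <= p (S l))%nat -> t l k' <> j) ->
       charR N r xi f (xs l) (q l) j <= charR N r xi f (xs l) (q l) (t l k)) /\
    (forall k, (1 <= k <= p (S l))%nat ->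
       xt (q l + k)%nat = newpt N r xi f (xs l) (q l) (t l k)) /\
    q (S l) = (q l + p (S l))%nat.

Definition is_global_min (f : R -> R) (y : R) : Prop :=
  0 <= y <= 1 /\ forall x, 0 <= x <= 1 -> f y <= f x.

Definition limit_point (xt : nat -> R) (y : R) : Prop :=
  forall eps, 0 < eps -> forall n, exists k, (n <= k)%nat /\ (1 <= k)%nat /\ Rabs (xt k - y) < eps.

Definition Kj (N : nat) (f : R -> R) (x : nat -> R) (xstar : R) (j : nat) : R :=
  Rmax ((f (x (j - 1)%nat) - f xstar) / rt N (xstar - x (j - 1)%nat))
       ((f (x j) - f xstar) / rt N (x j - xstar)).

Definition Mj (N : nat) (f : R -> R) (x : nat -> R) (j : nat) : R :=
  Rabs (f (x (j - 1)%nat) - f (x j)) / rt N (x j - x (j - 1)%nat).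

(* Main.v *)
Require Import Defs.
From Stdlib Require Import Reals Lra Lia Arith List ClassicalEpsilon Classical ZArith.
Import ListNotations.
Open Scope R_scope.

Lemma invN_pos N : (1 <= N)%nat -> 0 < / INR N.
Proof. intros. apply Rinv_0_lt_compat. apply lt_0_INR. lia. Qed.

Lemma rt_ge0 N a : 0 <= rt N a.
Proof. unfold rt. destruct (Rlt_dec 0 a). unfold Rpower. left; apply exp_pos. lra. Qed.

Lemma rt_pos N a : 0 < a -> 0 < rt N a.
Proof. intros. unfold rt. destruct (Rlt_dec 0 a). unfold Rpower. apply exp_pos. lra. Qed.

Lemma rt_mono N a b : (1 <= N)%nat -> 0 <= a <= b -> rt N a <= rt N b.
Proof.
  intros HN [H1 H2]. unfold rt.
  destruct (Rlt_dec 0 a); destruct (Rlt_dec 0 b); try lra.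
  - apply Rle_Rpower_l. left; apply invN_pos; auto. lra.
  - unfold Rpower; left; apply exp_pos.
Qed.

Lemma rt_powN N d : (1 <= N)%nat -> 0 < d -> (rt N d) ^ N = d.
Proof.
  intros HN Hd. unfold rt. destruct (Rlt_dec 0 d); [|lra].
  rewrite <- Rpower_pow by (unfold Rpower; apply exp_pos).
  rewrite Rpower_mult. rewrite Rinv_l. apply Rpower_1; auto.
  apply not_0_INR; lia.
Qed.

Lemma rt_of_pow N E : (1 <= N)%nat -> 0 < E -> rt N (E ^ N) = E.
Proof.
  intros HN HE. unfold rt. destruct (Rlt_dec 0 (E^N)).
  - rewrite <- Rpower_pow by auto. rewrite Rpower_mult, Rinv_r. apply Rpower_1; auto.
    apply not_0_INR; lia.
  - exfalso; apply n; apply pow_lt; auto.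
Qed.

Lemma maxl_ge l x : In x l -> x <= maxl l.
Proof.
  induction l; simpl; intros H; [tauto|]. destruct H as [<-|H].
  apply Rmax_l. eapply Rle_trans; [apply IHl; auto| apply Rmax_r].
Qed.

Lemma maxl_le l B : 0 <= B -> (forall x, In x l -> x <= B) -> maxl l <= B.
Proof.
  induction l; simpl; intros H0 H; auto. apply Rmax_lub; auto.
Qed.

Lemma maxl_ge0 l : 0 <= maxl l.
Proof. induction l; simpl. lra. eapply Rle_trans; [apply IHl|apply Rmax_r]. Qed.

Lemma pigeon (M p : nat) (P : nat -> nat -> Prop) :
  (forall m, (m < M)%nat -> exists k, (1 <= k <= p)%nat /\ P m k) ->
  (forall m m' k, (m < M)%nat -> (m' < M)%nat -> P m k -> P m' k -> m = m') ->
  (M <= p)%nat.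
Proof.
  intros H1 H2.
  set (g := fun m => match lt_dec m M with
                     | left h => proj1_sig (constructive_indefinite_description _ (H1 m h))
                     | right _ => 0%nat end).
  assert (Hg : forall m, (m < M)%nat -> (1 <= g m <= p)%nat /\ P m (g m)).
  { intros m hm. unfold g. destruct (lt_dec m M); [|lia].
    destruct (constructive_indefinite_description _ (H1 m l)); simpl; auto. }
  assert (ND : NoDup (map g (seq 0 M))).
  { apply NoDup_map_NoDup_ForallPairs. intros a b Ha Hb E.
    apply in_seq in Ha; apply in_seq in Hb.
    destruct (Hg a) as [_ Pa]; [lia|]. destruct (Hg b) as [_ Pb]; [lia|].
    rewrite E in Pa. apply (H2 a b (g b)); auto; lia. apply seq_NoDup. }
  assert (Inc : incl (map g (seq 0 M)) (seq 1 p)).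
  { intros x Hx. apply in_map_iff in Hx. destruct Hx as [m [<- Hm]].
    apply in_seq in Hm. destruct (Hg m) as [Hb _]; [lia|]. apply in_seq; lia. }
  pose proof (NoDup_incl_length ND Inc). rewrite length_map, !length_seq in H. auto.
Qed.


Lemma in_Iset q t : (2 <= t <= q)%nat -> In t (Iset q t).
Proof.
  intros H. unfold Iset. apply filter_In. split.
  unfold idx. apply in_seq. lia.
  apply andb_true_intro; split; apply Nat.leb_le; lia.
Qed.

Lemma muj_ge_slope N xi f x q t : (2 <= t <= q)%nat ->
  slope N f x t <= muj N xi f x q t.
Proof.
  intros H. unfold muj. eapply Rle_trans; [|apply Rmax_l].
  eapply Rle_trans; [|apply Rmax_l]. unfold lam. apply maxl_ge.
  apply in_map. apply in_Iset; auto.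
Qed.

Lemma muj_ge_xi N xi f x q t : xi <= muj N xi f x q t.
Proof. unfold muj. apply Rmax_r. Qed.

Lemma newpt_margin N r xi f x q t : (1 <= N)%nat -> 1 < r -> 0 < xi ->
  (2 <= t <= q)%nat -> 0 < x t - x (t-1)%nat ->
  x (t-1)%nat + (1 - / r) / 2 * (x t - x (t-1)%nat) <= newpt N r xi f x q t /\
  newpt N r xi f x q t <= x t - (1 - / r) / 2 * (x t - x (t-1)%nat).
Proof.
  intros HN Hr Hxi Ht Hd.
  set (d := x t - x (t-1)%nat) in *.
  set (m := muj N xi f x q t).
  set (D := f (x t) - f (x (t - 1)%nat)).
  assert (Hm : 0 < m) by (pose proof (muj_ge_xi N xi f x q t); unfold m; lra).
  assert (Hs : slope N f x t <= m) by (apply muj_ge_slope; auto).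
  unfold slope in Hs. fold D d in Hs.
  assert (Hrt : 0 < rt N d) by (apply rt_pos; auto).
  assert (HD : Rabs D <= m * rt N d).
  { apply (Rmult_le_compat_r (rt N d)) in Hs; [|lra].
    unfold Rdiv in Hs. rewrite Rmult_assoc, Rinv_l in Hs; lra. }
  assert (HX0 : 0 <= Rabs D / m) by (unfold Rdiv; apply Rmult_le_pos; [apply Rabs_pos|left; apply Rinv_0_lt_compat; lra]).
  assert (HX1 : Rabs D / m <= rt N d).
  { apply Rmult_le_reg_r with m; auto. unfold Rdiv. rewrite Rmult_assoc, Rinv_l; lra. }
  assert (HX : (Rabs D / m) ^ N <= d).
  { rewrite <- (rt_powN N d) by auto. apply pow_incr; auto. }
  assert (HX' : 0 <= (Rabs D / m) ^ N) by (apply pow_le; auto).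
  assert (Hsg : -1 <= sgn D <= 1).
  { unfold sgn. destruct (Rlt_dec 0 D); [lra|]. destruct (Rlt_dec D 0); lra. }
  assert (Hir : 0 < / r < 1).
  { split. apply Rinv_0_lt_compat; lra. rewrite <- Rinv_1. apply Rinv_lt_contravar; lra. }
  unfold newpt. fold m D d.
  replace (/ (2 * r)) with (/ 2 * / r) by (field; lra).
  set (X := (Rabs D / m) ^ N) in *. set (s := sgn D) in *. set (ir := / r) in *.
  assert (Hb : - (ir * X) <= ir * X * s <= ir * X).
  { assert (0 <= ir * X) by (apply Rmult_le_pos; lra).
    split; nra. }
  assert (ir * X <= ir * d) by nra.
  unfold d in *. split; nra.
Qed.


Lemma q_succ f N r xi xt q p xs t : PLT_run f N r xi xt q p xs t ->
  forall l, (1 <= l)%nat -> q (S l) = (q l + p (S l))%nat /\ (1 <= p (S l))%nat.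
Proof.
  intros (_&_&_&_&H) l Hl. destruct (H l Hl) as (_&_&_&Hp&_&_&_&_&_&Hq). split; [auto|lia].
Qed.

Lemma q_ge f N r xi xt q p xs t : PLT_run f N r xi xt q p xs t ->
  forall l m, (1 <= l)%nat -> (q l + m <= q (l + m))%nat.
Proof.
  intros Hr l m Hl. induction m. rewrite !Nat.add_0_r; lia.
  replace (l + S m)%nat with (S (l + m)) by lia.
  destruct (q_succ _ _ _ _ _ _ _ _ _ Hr (l+m)) as [H1 H2]; lia.
Qed.

Lemma q_mono f N r xi xt q p xs t : PLT_run f N r xi xt q p xs t ->
  forall l l', (1 <= l <= l')%nat -> (q l + (l' - l) <= q l')%nat.
Proof.
  intros Hr l l' H. replace l' with (l + (l' - l))%nat at 2 by lia. apply (q_ge _ _ _ _ _ _ _ _ _ Hr); lia.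
Qed.

Lemma decomp f N r xi xt q p xs t : PLT_run f N r xi xt q p xs t ->
  forall k, (q 1 < k)%nat -> exists l j, (1 <= l)%nat /\ (1 <= j <= p (S l))%nat /\ k = (q l + j)%nat.
Proof.
  intros Hr.
  assert (A : forall n k, (q 1 < k <= q (S (S n)))%nat ->
     exists l j, (1 <= l)%nat /\ (1 <= j <= p (S l))%nat /\ k = (q l + j)%nat).
  { induction n; intros k Hk.
    - destruct (q_succ _ _ _ _ _ _ _ _ _ Hr 1) as [H1 H2]; [lia|].
      exists 1%nat, (k - q 1)%nat. lia.
    - destruct (q_succ _ _ _ _ _ _ _ _ _ Hr (S (S n))) as [H1 H2]; [lia|].
      destruct (Nat.le_gt_cases k (q (S (S n)))).
      + apply IHn; lia.
      + exists (S (S n)), (k - q (S (S n)))%nat. lia. }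
  intros k Hk. apply (A k). split; auto.
  pose proof (q_ge _ _ _ _ _ _ _ _ _ Hr 1 (S k)). simpl in H. lia.
Qed.

Lemma xs_mono f N r xi xt q p xs t : PLT_run f N r xi xt q p xs t ->
  forall l i i', (1 <= l)%nat -> (1 <= i)%nat -> (i < i')%nat -> (i' <= q l)%nat -> xs l i < xs l i'.
Proof.
  intros (_&_&_&_&H) l i i' Hl Hi Hii Hi'. destruct (H l Hl) as (Hs&_).
  induction i'. lia.
  destruct (Nat.eq_dec i i'). subst. apply Hs; lia.
  eapply Rlt_trans. apply IHi'; lia. apply Hs; lia.
Qed.

Lemma xs_le f N r xi xt q p xs t : PLT_run f N r xi xt q p xs t ->
  forall l i i', (1 <= l)%nat -> (1 <= i)%nat -> (i <= i')%nat -> (i' <= q l)%nat -> xs l i <= xs l i'.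
Proof.
  intros Hr l i i' Hl Hi Hii Hi'. destruct (Nat.eq_dec i i'). subst; lra.
  left; eapply xs_mono; eauto; lia.
Qed.

Lemma xt_in01 f N r xi xt q p xs t : (1 <= N)%nat -> 1 < r -> 0 < xi ->
  PLT_run f N r xi xt q p xs t ->
  forall k, (1 <= k)%nat -> 0 <= xt k <= 1.
Proof.
  intros HN Hr Hxi Hrun k. induction k as [k IH] using lt_wf_ind. intros Hk.
  pose proof Hrun as (Hq1&Hx1&Hx2&Hin&H).
  destruct (Nat.le_gt_cases k (q 1%nat)).
  - destruct (Nat.eq_dec k 1%nat). subst; rewrite Hx1; lra. destruct (Nat.eq_dec k 2%nat). subst; rewrite Hx2; lra.
    pose proof (Hin k ltac:(lia)); lra.
  - destruct (decomp _ _ _ _ _ _ _ _ _ Hrun k H0) as (l&j&Hl&Hj&->).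
    destruct (H l Hl) as (Hs&Hex&Hex2&Hp&Ht&_&_&_&Hnew&_).
    rewrite (Hnew j Hj).
    pose proof (Ht j Hj) as Htj.
    set (tt := t l j) in *.
    destruct (Hex (tt - 1)%nat ltac:(lia)) as (ka&Hka&Ea).
    destruct (Hex tt ltac:(lia)) as (kb&Hkb&Eb).
    assert (Hd : 0 < xs l tt - xs l (tt-1)%nat).
    { pose proof (Hs (tt-1)%nat ltac:(lia)). replace (S (tt-1)) with tt in H1 by lia. lra. }
    pose proof (newpt_margin N r xi f (xs l) (q l) tt HN Hr Hxi ltac:(lia) Hd) as [M1 M2].
    assert (0 <= (1 - / r) / 2).
    { assert (/ r < 1). rewrite <- Rinv_1. apply Rinv_lt_contravar; lra. lra. }
    assert (0 <= xs l (tt - 1)%nat <= 1) by (rewrite Ea; apply IH; lia).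
    assert (0 <= xs l tt <= 1) by (rewrite Eb; apply IH; lia).
    assert (0 <= (1 - / r) / 2 * (xs l tt - xs l (tt - 1)%nat)) by (apply Rmult_le_pos; lra).
    split; lra.
Qed.

Lemma xs_in01 f N r xi xt q p xs t : (1 <= N)%nat -> 1 < r -> 0 < xi ->
  PLT_run f N r xi xt q p xs t ->
  forall l i, (1 <= l)%nat -> (1 <= i <= q l)%nat -> 0 <= xs l i <= 1.
Proof.
  intros HN Hr Hxi Hrun l i Hl Hi. pose proof Hrun as (_&_&_&_&H).
  destruct (H l Hl) as (_&Hex&_). destruct (Hex i Hi) as (k&Hk&->).
  apply (xt_in01 f N r xi xt q p xs t HN Hr Hxi Hrun k). lia.
Qed.


Lemma charR_bounds N r xi f x q j : (1 <= N)%nat -> 1 < r -> 0 < xi ->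
  (2 <= j <= q)%nat -> 0 < x j - x (j-1)%nat ->
  -2 * Rmin (f (x j)) (f (x (j-1)%nat)) < charR N r xi f x q j /\
  charR N r xi f x q j <= r * muj N xi f x q j * rt N (x j - x (j-1)%nat)
     - 2 * Rmin (f (x j)) (f (x (j-1)%nat)).
Proof.
  intros HN Hr Hxi Hj Hd.
  pose proof (muj_ge_slope N xi f x q j Hj) as Hs.
  pose proof (muj_ge_xi N xi f x q j) as Hm.
  unfold charR. set (m := muj N xi f x q j) in *.
  set (d := x j - x (j-1)%nat) in *.
  unfold slope in Hs. fold d in Hs.
  set (A := f (x j)) in *. set (B := f (x (j-1)%nat)) in *.
  assert (Hrt : 0 < rt N d) by (apply rt_pos; auto).
  assert (HD : Rabs (A - B) <= m * rt N d).
  { apply (Rmult_le_compat_r (rt N d)) in Hs; [|lra].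
    unfold Rdiv in Hs. rewrite Rmult_assoc, Rinv_l in Hs; lra. }
  set (a := r * m * rt N d).
  assert (Ha : 0 < a) by (unfold a; apply Rmult_lt_0_compat; [apply Rmult_lt_0_compat|]; lra).
  assert (Ha2 : Rabs (A - B) <= a).
  { unfold a. assert (0 <= m * rt N d) by (apply Rmult_le_pos; lra).
    replace (r * m * rt N d) with (r * (m * rt N d)) by ring. nra. }
  set (D := A - B) in *.
  assert (HD2 : D ^ 2 = Rabs D * Rabs D).
  { rewrite <- Rabs_mult. simpl. rewrite Rmult_1_r. rewrite Rabs_right; [ring|].
    apply Rle_ge, Rle_0_sqr. }
  assert (Hq : D ^ 2 / a <= Rabs D).
  { apply Rmult_le_reg_r with a; auto. unfold Rdiv. rewrite Rmult_assoc, Rinv_l by lra.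
    rewrite HD2. pose proof (Rabs_pos D). nra. }
  assert (Hq2 : D ^ 2 / a >= 0).
  { unfold Rdiv. apply Rle_ge, Rmult_le_pos. rewrite HD2; apply Rmult_le_pos; apply Rabs_pos.
    left; apply Rinv_0_lt_compat; auto. }
  assert (Hlow : Rabs D < a + D ^ 2 / a).
  { destruct (Req_dec D 0) as [E|E].
    - rewrite E, Rabs_R0. lra.
    - assert (a + D^2/a >= 2 * Rabs D).
      { apply Rle_ge. apply Rmult_le_reg_r with a; auto. rewrite Rmult_plus_distr_r. unfold Rdiv.
        rewrite (Rmult_assoc (D^2)), Rinv_l by lra. rewrite HD2.
        assert (0 <= (a - Rabs D) * (a - Rabs D)) by apply Rle_0_sqr. nra. }
      assert (0 < Rabs D) by (apply Rabs_pos_lt; auto). lra. }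
  assert (Hmin : A + B = 2 * Rmin A B + Rabs D).
  { unfold D, Rmin. destruct (Rle_dec A B).
    rewrite Rabs_left1 by lra. ring. rewrite Rabs_right by lra. ring. }
  rewrite Hmin. split; lra.
Qed.

Lemma H_nonneg f N H : (1 <= N)%nat ->
  (forall x1 x2, 0 <= x1 <= 1 -> 0 <= x2 <= 1 -> Rabs (f x1 - f x2) <= H * rt N (Rabs (x1 - x2))) ->
  0 <= H.
Proof.
  intros HN Hh. pose proof (Hh 1 0 ltac:(lra) ltac:(lra)).
  replace (1 - 0) with 1 in H0 by ring. rewrite Rabs_R1 in H0.
  pose proof (rt_pos N 1 ltac:(lra)). pose proof (Rabs_pos (f 1 - f 0)).
  destruct (Rle_dec 0 H); auto. apply Rnot_le_lt in n. nra.
Qed.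

Lemma slope_le_H f N H x i : (1 <= N)%nat ->
  (forall x1 x2, 0 <= x1 <= 1 -> 0 <= x2 <= 1 -> Rabs (f x1 - f x2) <= H * rt N (Rabs (x1 - x2))) ->
  0 < x i - x (i-1)%nat -> 0 <= x i <= 1 -> 0 <= x (i-1)%nat <= 1 ->
  slope N f x i <= H.
Proof.
  intros HN Hh Hd H1 H2. unfold slope.
  pose proof (Hh (x i) (x (i-1)%nat) H1 H2). rewrite (Rabs_right (x i - x (i-1)%nat)) in H0 by lra.
  pose proof (rt_pos N _ Hd).
  apply Rmult_le_reg_r with (rt N (x i - x (i - 1)%nat)); auto.
  unfold Rdiv. rewrite Rmult_assoc, Rinv_l by lra. lra.
Qed.

Lemma muj_le_C f N H xi x q j : (1 <= N)%nat -> 0 < xi ->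
  (forall x1 x2, 0 <= x1 <= 1 -> 0 <= x2 <= 1 -> Rabs (f x1 - f x2) <= H * rt N (Rabs (x1 - x2))) ->
  (forall i, (2 <= i <= q)%nat -> 0 < x i - x (i-1)%nat /\ 0 <= x i <= 1 /\ 0 <= x (i-1)%nat <= 1) ->
  (2 <= j <= q)%nat ->
  muj N xi f x q j <= Rmax H xi.
Proof.
  intros HN Hxi Hh Hx Hj. pose proof (H_nonneg f N H HN Hh) as H0.
  assert (Hsl : forall i, In i (idx q) -> slope N f x i <= H).
  { intros i Hi. unfold idx in Hi. apply in_seq in Hi. destruct (Hx i ltac:(lia)) as (?&?&?).
    apply slope_le_H; auto. }
  assert (Hall : mu_all N f x q <= H).
  { unfold mu_all. apply maxl_le; auto. intros y Hy. apply in_map_iff in Hy.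
    destruct Hy as (i&<-&Hi). auto. }
  assert (Hlam : lam N f x q j <= H).
  { unfold lam. apply maxl_le; auto. intros y Hy. apply in_map_iff in Hy.
    destruct Hy as (i&<-&Hi). unfold Iset in Hi. apply filter_In in Hi. apply Hsl; tauto. }
  assert (Hgam : gam N f x q j <= H).
  { unfold gam. destruct (Hx j Hj) as (Hd&_).
    assert (Hin : In (x j - x (j-1)%nat) (map (fun i => x i - x (i - 1)%nat) (idx q))).
    { apply in_map_iff. exists j. split; auto. unfold idx; apply in_seq; lia. }
    apply maxl_ge in Hin. fold (Xmax x q) in Hin.
    pose proof (rt_mono N _ _ HN (conj (Rlt_le _ _ Hd) Hin)).
    pose proof (rt_pos N _ Hd).
    pose proof (maxl_ge0 (map (slope N f x) (idx q))). fold (mu_all N f x q) in H3.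
    apply Rle_trans with (mu_all N f x q); [|auto].
    unfold Rdiv. rewrite Rmult_assoc.
    assert (rt N (x j - x (j - 1)%nat) * / rt N (Xmax x q) <= 1).
    { apply Rmult_le_reg_r with (rt N (Xmax x q)); [lra|].
      rewrite Rmult_assoc, Rinv_l by lra. lra. }
    assert (0 <= rt N (x j - x (j - 1)%nat) * / rt N (Xmax x q)).
    { apply Rmult_le_pos. lra. left; apply Rinv_0_lt_compat; lra. }
    nra. }
  unfold muj. apply Rmax_lub. apply Rmax_lub; eapply Rle_trans; eauto; apply Rmax_l.
  apply Rmax_r.
Qed.


Lemma rt0 N : rt N 0 = 0.
Proof. unfold rt. destruct (Rlt_dec 0 0); lra. Qed.

Lemma Kpart_bound N (fa fs u d : R) : (1 <= N)%nat -> 0 <= u <= d -> 0 < d ->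
  (u = 0 -> fa = fs) -> fs <= fa ->
  0 <= (fa - fs) / rt N u /\ forall K, (fa - fs) / rt N u <= K -> fa - fs <= K * rt N d.
Proof.
  intros HN Hu Hd Hz Hle.
  destruct (Req_dec u 0) as [E|E].
  - rewrite E, rt0. unfold Rdiv. rewrite Rinv_0, Rmult_0_r. split; [lra|].
    intros K HK. rewrite (Hz E). pose proof (rt_ge0 N d). replace (fs - fs) with 0 by ring. nra.
  - assert (Hu' : 0 < u) by lra. pose proof (rt_pos N u Hu').
    pose proof (rt_mono N u d HN ltac:(lra)).
    split. unfold Rdiv. apply Rmult_le_pos. lra. left; apply Rinv_0_lt_compat; lra.
    intros K HK. assert (fa - fs <= K * rt N u).
    { apply Rmult_le_compat_r with (r := rt N u) in HK; [|lra].
      unfold Rdiv in HK. rewrite Rmult_assoc, Rinv_l in HK; lra. }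
    assert (0 <= K).
    { eapply Rle_trans; [|apply HK]. unfold Rdiv. apply Rmult_le_pos. lra. left; apply Rinv_0_lt_compat; lra. }
    nra.
Qed.

Lemma charR_xstar N r xi f x q j xs : (1 <= N)%nat -> 1 < r -> 0 < xi ->
  (2 <= j <= q)%nat -> 0 < x j - x (j-1)%nat ->
  x (j-1)%nat <= xs <= x j -> f xs <= f (x (j-1)%nat) -> f xs <= f (x j) ->
  Mj N f x j ^ 2 <= Rpower 4 (1 - / INR N) * Kj N f x xs j ^ 2 ->
  Rpower 2 (1 - / INR N) * Kj N f x xs j
    + sqrt (Rpower 4 (1 - / INR N) * Kj N f x xs j ^ 2 - Mj N f x j ^ 2)
    <= r * muj N xi f x q j ->
  -2 * f xs <= charR N r xi f x q j.
Proof.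
  intros HN Hr Hxi Hj Hd Hxs HA HB C1 C2.
  set (e := 1 - / INR N) in *.
  assert (He : 0 <= e).
  { unfold e. assert (/ INR N <= 1).
    { rewrite <- Rinv_1. apply Rinv_le_contravar. lra. apply (le_INR 1); auto. }
    lra. }
  set (s := Rpower 2 e) in *.
  assert (Hs : 1 <= s).
  { unfold s. rewrite <- (Rpower_O 2) by lra. apply Rle_Rpower; lra. }
  assert (H4 : Rpower 4 e = s * s).
  { unfold s. rewrite Rpower_mult_distr by lra. f_equal; ring. }
  rewrite H4 in C1, C2.
  set (d := x j - x (j-1)%nat) in *.
  set (dl := rt N d). assert (Hdl : 0 < dl) by (apply rt_pos; auto).
  set (A := f (x (j-1)%nat) - f xs). set (B := f (x j) - f xs).
  destruct (Kpart_bound N (f (x (j-1)%nat)) (f xs) (xs - x (j-1)%nat) d HN ltac:(unfold d; lra) Hd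
     ltac:(intros E; f_equal; lra) HA) as [K1 HK1].
  destruct (Kpart_bound N (f (x j)) (f xs) (x j - xs) d HN ltac:(unfold d; lra) Hd
     ltac:(intros E; f_equal; lra) HB) as [K2 HK2].
  set (K := Kj N f x xs j) in *.
  assert (HA' : A <= K * dl) by (apply HK1; unfold K, Kj; apply Rmax_l).
  assert (HB' : B <= K * dl) by (apply HK2; unfold K, Kj; apply Rmax_r).
  assert (HK0 : 0 <= K) by (eapply Rle_trans; [apply K1| unfold K, Kj; apply Rmax_l]).
  set (M := Mj N f x j) in *.
  set (D := f (x j) - f (x (j-1)%nat)).
  assert (HM : Rabs D = M * dl).
  { unfold M, Mj. fold d dl. unfold Rdiv. rewrite Rmult_assoc, Rinv_l by lra.
    rewrite Rmult_1_r. unfold D. rewrite <- Rabs_Ropp. f_equal; ring. }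
  assert (HM0 : 0 <= M).
  { unfold M, Mj. unfold Rdiv. apply Rmult_le_pos. apply Rabs_pos. left; apply Rinv_0_lt_compat; auto. }
  assert (HD2 : D ^ 2 = M^2 * dl^2).
  { replace (D ^ 2) with (Rsqr D) by (unfold Rsqr; ring). rewrite (Rsqr_abs D). unfold Rsqr. rewrite HM. ring. }
  set (m := muj N xi f x q j) in *.
  assert (Hm : 0 < m) by (pose proof (muj_ge_xi N xi f x q j); unfold m; lra).
  set (w := sqrt (s * s * K ^ 2 - M ^ 2)) in *.
  assert (Hw0 : 0 <= w) by apply sqrt_pos.
  assert (Hw2 : w * w = s * s * K ^ 2 - M ^ 2) by (apply sqrt_sqrt; lra).
  set (a := r * m * dl).
  assert (Ha0 : 0 < a) by (unfold a; apply Rmult_lt_0_compat; [apply Rmult_lt_0_compat|]; lra).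
  assert (Ha : dl * (s * K + w) <= a).
  { unfold a. replace (r * m * dl) with (dl * (r * m)) by ring. apply Rmult_le_compat_l; lra. }
  assert (HS : A + B <= 2 * s * K * dl).
  { assert (K * dl <= s * K * dl). { assert (0 <= K * dl) by nra. nra. } lra. }
  assert (Hq : (A + B) * a <= a * a + D ^ 2).
  { rewrite HD2.
    assert (Hx : dl * w <= a - s * K * dl) by nra.
    assert (0 <= dl * w) by nra.
    assert ((dl * w) * (dl * w) <= (a - s * K * dl) * (a - s * K * dl)) by nra.
    assert ((A + B) * a <= 2 * s * K * dl * a) by nra.
    nra. }
  unfold charR. fold m d dl a D.
  assert (D ^ 2 / a >= (A + B) - a).
  { apply Rle_ge. apply Rmult_le_reg_r with a; auto. unfold Rdiv.
    rewrite Rmult_assoc, Rinv_l by lra. nra. }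
  unfold A, B in *. lra.
Qed.


Definition ilen (xs : nat -> nat -> R) (t : nat -> nat -> nat) l j :=
  xs l (t l j) - xs l (t l j - 1)%nat.

Lemma newpt_in f N r xi xt q p xs t : (1 <= N)%nat -> 1 < r -> 0 < xi ->
  PLT_run f N r xi xt q p xs t ->
  forall l j, (1 <= l)%nat -> (1 <= j <= p (S l))%nat ->
  (2 <= t l j <= q l)%nat /\ 0 < ilen xs t l j /\
  xs l (t l j - 1)%nat + (1 - / r) / 2 * ilen xs t l j <= xt (q l + j)%nat /\
  xt (q l + j)%nat <= xs l (t l j) - (1 - / r) / 2 * ilen xs t l j.
Proof.
  intros HN Hr Hxi Hrun l j Hl Hj. pose proof Hrun as (_&_&_&_&H).
  destruct (H l Hl) as (Hs&Hex&Hex2&Hp&Ht&_&_&_&Hnew&_).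
  pose proof (Ht j Hj) as Htj. rewrite (Hnew j Hj).
  assert (Hd : 0 < ilen xs t l j).
  { unfold ilen. pose proof (Hs (t l j-1)%nat ltac:(lia)). replace (S (t l j-1)) with (t l j) in H0 by lia. lra. }
  destruct (newpt_margin N r xi f (xs l) (q l) (t l j) HN Hr Hxi Htj Hd); auto.
Qed.

Lemma c_pos r : 1 < r -> 0 < (1 - / r) / 2.
Proof. intros. assert (/ r < 1). rewrite <- Rinv_1. apply Rinv_lt_contravar; lra. lra. Qed.

Lemma separation f N r xi xt q p xs t : (1 <= N)%nat -> 1 < r -> 0 < xi ->
  PLT_run f N r xi xt q p xs t ->
  forall l j k1, (1 <= l)%nat -> (1 <= j <= p (S l))%nat -> (1 <= k1 < q l + j)%nat ->
  (1 - / r) / 2 * ilen xs t l j <= Rabs (xt k1 - xt (q l + j)%nat).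
Proof.
  intros HN Hr Hxi Hrun l j k1 Hl Hj Hk.
  pose proof (c_pos r Hr) as Hc. set (c := (1 - / r) / 2) in *.
  pose proof Hrun as (_&_&_&_&H).
  destruct (H l Hl) as (Hs&Hex&Hex2&Hp&Ht&Hinj&_).
  destruct (newpt_in f N r xi xt q p xs t HN Hr Hxi Hrun l j Hl Hj) as (Htj&Hd&M1&M2).
  fold c in M1, M2.
  assert (0 <= c * ilen xs t l j) by nra.
  destruct (Nat.le_gt_cases k1 (q l)).
  - destruct (Hex2 k1 ltac:(lia)) as (i&Hi&<-).
    destruct (Nat.le_gt_cases i (t l j - 1)).
    + pose proof (xs_le _ _ _ _ _ _ _ _ _ Hrun l i (t l j - 1) Hl ltac:(lia) ltac:(lia) ltac:(lia)).
      rewrite Rabs_left1 by lra. lra.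
    + pose proof (xs_le _ _ _ _ _ _ _ _ _ Hrun l (t l j) i Hl ltac:(lia) ltac:(lia) ltac:(lia)).
      rewrite Rabs_right by lra. lra.
  - set (j1 := (k1 - q l)%nat). replace k1 with (q l + j1)%nat by (unfold j1; lia).
    assert (Hj1 : (1 <= j1 <= p (S l))%nat) by (unfold j1; lia).
    destruct (newpt_in f N r xi xt q p xs t HN Hr Hxi Hrun l j1 Hl Hj1) as (Ht1&Hd1&M1'&M2').
    fold c in M1', M2'. assert (0 <= c * ilen xs t l j1) by nra.
    assert (t l j1 <> t l j) by (intros E; apply Hinj in E; unfold j1 in *; lia).
    destruct (Nat.le_gt_cases (t l j1) (t l j - 1)).
    + pose proof (xs_le _ _ _ _ _ _ _ _ _ Hrun l (t l j1) (t l j - 1) Hl ltac:(lia) ltac:(lia) ltac:(lia)).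
      rewrite Rabs_left1 by lra. lra.
    + pose proof (xs_le _ _ _ _ _ _ _ _ _ Hrun l (t l j) (t l j1 - 1) Hl ltac:(lia) ltac:(lia) ltac:(lia)).
      rewrite Rabs_right by lra. lra.
Qed.


Lemma bucket g x : 0 < g -> 0 <= x <= 1 ->
  (1 <= Z.to_nat (up (x / g)) <= Z.to_nat (up (1 / g)))%nat.
Proof.
  intros Hg Hx.
  destruct (archimed (x / g)) as [A1 A2]. destruct (archimed (1 / g)) as [B1 B2].
  assert (0 <= x / g) by (unfold Rdiv; apply Rmult_le_pos; [lra|left; apply Rinv_0_lt_compat; lra]).
  assert (x / g <= 1 / g) by (unfold Rdiv; apply Rmult_le_compat_r; [left; apply Rinv_0_lt_compat|]; lra).
  assert (Z1 : (0 < up (x / g))%Z) by (apply lt_IZR; simpl; lra).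
  assert (Z2 : (up (x / g) < up (1 / g) + 1)%Z) by (apply lt_IZR; rewrite plus_IZR; simpl; lra).
  lia.
Qed.

Lemma bucket_eq g x y : 0 < g -> 0 <= x <= 1 -> 0 <= y <= 1 ->
  Z.to_nat (up (x / g)) = Z.to_nat (up (y / g)) -> Rabs (x - y) < g.
Proof.
  intros Hg Hx Hy E.
  destruct (archimed (x / g)) as [A1 A2]. destruct (archimed (y / g)) as [B1 B2].
  assert (0 <= x / g) by (unfold Rdiv; apply Rmult_le_pos; [lra|left; apply Rinv_0_lt_compat; lra]).
  assert (0 <= y / g) by (unfold Rdiv; apply Rmult_le_pos; [lra|left; apply Rinv_0_lt_compat; lra]).
  assert (Z1 : (0 < up (x / g))%Z) by (apply lt_IZR; simpl; lra).
  assert (Z2 : (0 < up (y / g))%Z) by (apply lt_IZR; simpl; lra).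
  assert (E' : up (x / g) = up (y / g)) by lia.
  rewrite E' in A1, A2.
  assert (Rabs (x / g - y / g) < 1) by (apply Rabs_def1; lra).
  replace (x / g - y / g) with ((x - y) / g) in H1 by (field; lra).
  unfold Rdiv in H1. rewrite Rabs_mult, (Rabs_right (/ g)) in H1 by (left; apply Rinv_0_lt_compat; lra).
  apply Rmult_lt_compat_r with (r := g) in H1; auto.
  rewrite Rmult_assoc, Rinv_l in H1; lra.
Qed.

Lemma long_finite f N r xi xt q p xs t : (1 <= N)%nat -> 1 < r -> 0 < xi ->
  PLT_run f N r xi xt q p xs t ->
  forall L, 0 < L -> exists K0, forall l j, (1 <= l)%nat -> (1 <= j <= p (S l))%nat ->
     (K0 <= q l + j)%nat -> ilen xs t l j < L.
Proof.
  intros HN Hr Hxi Hrun L HL.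
  apply NNPP. intros Hno.
  set (long := fun k => exists l j, (1 <= l)%nat /\ (1 <= j <= p (S l))%nat /\ k = (q l + j)%nat /\ L <= ilen xs t l j).
  assert (Hex : forall K0, exists k, (K0 <= k)%nat /\ long k).
  { intros K0. apply NNPP. intros Hn. apply Hno. exists K0. intros l j Hl Hj HK.
    apply Rnot_le_lt. intros HL'. apply Hn. exists (q l + j)%nat. split; auto.
    exists l, j. auto. }
  set (nxt := fun K0 => proj1_sig (constructive_indefinite_description _ (Hex K0))).
  assert (Hnxt : forall K0, (K0 <= nxt K0)%nat /\ long (nxt K0)).
  { intros K0. unfold nxt. destruct (constructive_indefinite_description _ (Hex K0)); auto. }
  set (s := fix s m := match m with O => nxt O | S m' => nxt (S (s m')) end).
  assert (Hs1 : forall m, (s m < s (S m))%nat).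
  { intros m. simpl. destruct (Hnxt (S (s m))). lia. }
  assert (Hsm : forall m m', (m < m')%nat -> (s m < s m')%nat).
  { intros m m' H. induction H. apply Hs1. pose proof (Hs1 m0). lia. }
  assert (Hlong : forall m, long (s m)).
  { intros m. destruct m; simpl; apply Hnxt. }
  pose proof (c_pos r Hr) as Hc. set (g := (1 - / r) / 2 * L).
  assert (Hg : 0 < g) by (unfold g; apply Rmult_lt_0_compat; lra).
  assert (Hin : forall m, 0 <= xt (s m) <= 1).
  { intros m. destruct (Hlong m) as (l&j&Hl&Hj&E&_). apply (xt_in01 f N r xi xt q p xs t HN Hr Hxi Hrun). lia. }
  assert (Hsep : forall m m', (m < m')%nat -> g <= Rabs (xt (s m) - xt (s m'))).
  { intros m m' Hmm. destruct (Hlong m') as (l&j&Hl&Hj&E&HLL).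
    rewrite E. pose proof (Hsm m m' Hmm).
    destruct (Hlong m) as (l0&j0&_&Hj0&E0&_).
    eapply Rle_trans; [|apply (separation f N r xi xt q p xs t HN Hr Hxi Hrun l j (s m) Hl Hj ltac:(lia))].
    unfold g. apply Rmult_le_compat_l; lra. }
  set (B := Z.to_nat (up (1 / g))).
  assert (Hp : (S B <= B)%nat).
  { apply (pigeon (S B) B (fun m k => k = Z.to_nat (up (xt (s m) / g)))).
    - intros m _. exists (Z.to_nat (up (xt (s m) / g))). split; auto. apply bucket; auto.
    - intros m m' k _ _ E1 E2. rewrite E1 in E2.
      apply bucket_eq in E2; auto.
      destruct (Nat.lt_total m m') as [H|[H|H]]; auto.
      + pose proof (Hsep m m' H). lra.
      + pose proof (Hsep m' m H). rewrite Rabs_minus_sym in H0. lra. }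
  lia.
Qed.


Lemma xs_good f N r xi xt q p xs t : (1 <= N)%nat -> 1 < r -> 0 < xi ->
  PLT_run f N r xi xt q p xs t ->
  forall l, (1 <= l)%nat -> forall i, (2 <= i <= q l)%nat ->
  0 < xs l i - xs l (i-1)%nat /\ 0 <= xs l i <= 1 /\ 0 <= xs l (i-1)%nat <= 1.
Proof.
  intros HN Hr Hxi Hrun l Hl i Hi.
  split. pose proof (xs_mono _ _ _ _ _ _ _ _ _ Hrun l (i-1) i Hl ltac:(lia) ltac:(lia) ltac:(lia)). lra.
  split; apply (xs_in01 f N r xi xt q p xs t HN Hr Hxi Hrun l); auto; lia.
Qed.

Lemma holder_near f N H a b E : (1 <= N)%nat -> 0 <= H ->
  (forall x1 x2, 0 <= x1 <= 1 -> 0 <= x2 <= 1 -> Rabs (f x1 - f x2) <= H * rt N (Rabs (x1 - x2))) ->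
  0 <= a <= 1 -> 0 <= b <= 1 -> rt N (Rabs (a - b)) <= E ->
  f b - H * E <= f a <= f b + H * E.
Proof.
  intros HN H0 Hh Ha Hb HE. pose proof (Hh a b Ha Hb).
  assert (H * rt N (Rabs (a - b)) <= H * E) by (apply Rmult_le_compat_l; auto).
  pose proof (Rle_abs (f a - f b)). pose proof (Rle_abs (- (f a - f b))). rewrite Rabs_Ropp in H4. lra.
Qed.

Lemma lp_in01 xt y : (forall k, (1 <= k)%nat -> 0 <= xt k <= 1) -> limit_point xt y -> 0 <= y <= 1.
Proof.
  intros Hin Hlp. split.
  - apply Rnot_lt_le. intros Hy. destruct (Hlp (- y) ltac:(lra) O) as (k&_&Hk&Ha).
    pose proof (Hin k Hk). apply Rabs_def2 in Ha. lra.
  - apply Rnot_lt_le. intros Hy. destruct (Hlp (y - 1) ltac:(lra) O) as (k&_&Hk&Ha).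
    pose proof (Hin k Hk). apply Rabs_def2 in Ha. lra.
Qed.


Theorem corollary1
  (f : R -> R) (N : nat) (r xi H : R) (Q : nat)
  (xt : nat -> R) (q p : nat -> nat) (xs : nat -> nat -> R) (t : nat -> nat -> nat)
  (xstar : R) (jf : nat -> nat) :
  (1 <= N)%nat -> 1 < r -> 0 < xi ->
  (forall x1 x2, 0 <= x1 <= 1 -> 0 <= x2 <= 1 ->
     Rabs (f x1 - f x2) <= H * rt N (Rabs (x1 - x2))) ->
  PLT_run f N r xi xt q p xs t ->
  (forall l, (1 < l)%nat -> (p l <= Q)%nat) ->
  is_global_min f xstar ->
  (forall l, (1 <= l)%nat ->
     (2 <= jf l <= q l)%nat /\ xs l (jf l - 1)%nat <= xstar <= xs l (jf l)) ->
  (forall L, exists l, (L <= l)%nat /\ (1 <= l)%nat /\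
     Mj N f (xs l) (jf l) ^ 2
       <= Rpower 4 (1 - / INR N) * Kj N f (xs l) xstar (jf l) ^ 2 /\
     Rpower 2 (1 - / INR N) * Kj N f (xs l) xstar (jf l)
       + sqrt (Rpower 4 (1 - / INR N) * Kj N f (xs l) xstar (jf l) ^ 2
               - Mj N f (xs l) (jf l) ^ 2)
       <= r * muj N xi f (xs l) (q l) (jf l)) ->
  forall y, limit_point xt y -> is_global_min f y.
Proof.
  intros HN Hr Hxi Hh Hrun HQ Hmin Hjf Hcond y Hlp.
  pose proof (xt_in01 f N r xi xt q p xs t HN Hr Hxi Hrun) as Hin.
  pose proof (lp_in01 xt y Hin Hlp) as Hy.
  destruct Hmin as [Hxs01 Hmin].
  split; auto. intros x Hx. eapply Rle_trans; [|apply (Hmin x Hx)].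
  apply Rnot_lt_le. intros Hlt.
  set (fs := f xstar) in *.
  set (eps := f y - fs).
  assert (Heps : 0 < eps) by (unfold eps; lra).
  pose proof (H_nonneg f N H HN Hh) as H0.
  set (C := Rmax H xi).
  assert (HC : 0 < C) by (unfold C; eapply Rlt_le_trans; [apply Hxi|apply Rmax_r]).
  set (Cn := r * C + 2 * H + 1).
  assert (HCn : 0 < Cn) by (unfold Cn; nra).
  set (E := eps / Cn).
  assert (HE : 0 < E) by (unfold E, Rdiv; apply Rmult_lt_0_compat; [lra|apply Rinv_0_lt_compat; lra]).
  assert (HEb : (r * C + 2 * H) * E < eps).
  { unfold E. apply Rmult_lt_reg_r with Cn; auto. unfold Rdiv.
    rewrite Rmult_assoc, (Rmult_assoc eps), Rinv_l by lra. unfold Cn. nra. }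
  set (L := E ^ N / 2).
  assert (HL : 0 < L) by (unfold L; apply Rmult_lt_0_compat; [apply pow_lt; auto|lra]).
  assert (Hrt2L : rt N (2 * L) = E) by (unfold L; replace (2 * (E ^ N / 2)) with (E ^ N) by field; apply rt_of_pow; auto).
  assert (HrtE : forall z, 0 <= z <= 2 * L -> rt N z <= E).
  { intros z Hz. rewrite <- Hrt2L. apply rt_mono; auto. }
  destruct (long_finite f N r xi xt q p xs t HN Hr Hxi Hrun L HL) as [K0 HK0].
  pose proof (c_pos r Hr) as Hc.
  set (theta := -2 * fs - eps).
  assert (StepA : forall n, exists l j, (n <= l)%nat /\ (1 <= l)%nat /\ (1 <= j <= p (S l))%nat /\
             charR N r xi f (xs l) (q l) (t l j) < theta).
  { intros n.
    destruct (Hlp L HL (Nat.max K0 (Nat.max (q n + 1) (q 1%nat + 1)))) as (k&Hkn&Hk1&Hky).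
    destruct (decomp _ _ _ _ _ _ _ _ _ Hrun k ltac:(lia)) as (l&j&Hl&Hj&Ek).
    assert (Hln : (n <= l)%nat).
    { destruct (Nat.le_gt_cases n l); auto.
      pose proof (q_mono _ _ _ _ _ _ _ _ _ Hrun (S l) n ltac:(lia)).
      destruct (q_succ _ _ _ _ _ _ _ _ _ Hrun l Hl). lia. }
    exists l, j. split; auto. split; auto. split; auto.
    destruct (newpt_in f N r xi xt q p xs t HN Hr Hxi Hrun l j Hl Hj) as (Htj&Hd&M1&M2).
    rewrite <- Ek in M1, M2.
    assert (Hshort : ilen xs t l j < L) by (apply (HK0 l j Hl Hj); lia).
    unfold ilen in *.
    set (tt := t l j) in *.
    destruct (xs_good f N r xi xt q p xs t HN Hr Hxi Hrun l Hl tt Htj) as (Hd'&Hb01&Ha01).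
    assert (HcL : 0 <= (1 - / r) / 2 * (xs l tt - xs l (tt - 1)%nat)) by (apply Rmult_le_pos; lra).
    pose proof (Rabs_def2 _ _ Hky) as [Hy1 Hy2].
    assert (Ea : rt N (Rabs (xs l (tt-1)%nat - y)) <= E).
    { apply HrtE. split. apply Rabs_pos. apply Rabs_le. lra. }
    assert (Eb : rt N (Rabs (xs l tt - y)) <= E).
    { apply HrtE. split. apply Rabs_pos. apply Rabs_le. lra. }
    pose proof (holder_near f N H _ _ E HN H0 Hh Ha01 Hy Ea) as Fa.
    pose proof (holder_near f N H _ _ E HN H0 Hh Hb01 Hy Eb) as Fb.
    destruct (charR_bounds N r xi f (xs l) (q l) tt HN Hr Hxi Htj Hd') as [_ Hup].
    assert (Hmu : muj N xi f (xs l) (q l) tt <= C).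
    { apply (muj_le_C f N H xi (xs l) (q l) tt HN Hxi Hh); auto.
      intros i Hi. apply (xs_good f N r xi xt q p xs t HN Hr Hxi Hrun l Hl i Hi). }
    pose proof (muj_ge_xi N xi f (xs l) (q l) tt).
    assert (Hrd : rt N (xs l tt - xs l (tt - 1)%nat) <= E) by (apply HrtE; lra).
    pose proof (rt_ge0 N (xs l tt - xs l (tt - 1)%nat)).
    assert (r * muj N xi f (xs l) (q l) tt * rt N (xs l tt - xs l (tt - 1)%nat) <= r * C * E).
    { apply Rmult_le_compat. apply Rmult_le_pos; lra. auto. apply Rmult_le_compat_l; lra. auto. }
    assert (Rmin (f (xs l tt)) (f (xs l (tt - 1)%nat)) >= f y - H * E).
    { unfold Rmin. destruct (Rle_dec _ _); lra. }
    unfold theta, eps in *. nra. }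

  assert (StepC : forall n, exists l, (n <= l)%nat /\ (1 <= l)%nat /\ f (xt (q l + 1)%nat) < fs + eps / 2).
  { intros n.
    destruct (Hcond (Nat.max n (Nat.max K0 1))) as (l&Hln&Hl&C1&C2).
    exists l. split; [lia|]. split; auto.
    destruct (Hjf l Hl) as (Hj&Hxj).
    destruct (xs_good f N r xi xt q p xs t HN Hr Hxi Hrun l Hl (jf l) Hj) as (Hdj&Hb01j&Ha01j).
    assert (Rj : -2 * fs <= charR N r xi f (xs l) (q l) (jf l)).
    { apply (charR_xstar N r xi f (xs l) (q l) (jf l) xstar HN Hr Hxi Hj Hdj Hxj); auto. }
    pose proof Hrun as (_&_&_&_&Hall).
    destruct (Hall l Hl) as (Hs&Hex&Hex2&Hp&Ht&Hinj&Hord&Hmax&Hnew&_).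
    assert (Hp1 : (1 <= 1 <= p (S l))%nat) by lia.
    assert (R1 : charR N r xi f (xs l) (q l) (jf l) <= charR N r xi f (xs l) (q l) (t l 1%nat)).
    { destruct (classic (exists k', (1 <= k' <= p (S l))%nat /\ t l k' = jf l)) as [[k' [Hk' Ek']]|Hno].
      - rewrite <- Ek'. destruct (Nat.eq_dec k' 1) as [->|Hne]; [lra|].
        apply Hord; lia.
      - apply Hmax; auto. intros k' Hk' E'. apply Hno. eauto. }
    destruct (newpt_in f N r xi xt q p xs t HN Hr Hxi Hrun l 1%nat Hl Hp1) as (Htj&Hd&M1&M2).
    assert (Hql : (l <= q l)%nat).
    { pose proof (q_mono _ _ _ _ _ _ _ _ _ Hrun 1 l ltac:(lia)). destruct Hrun as (Hq1&_). lia. }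
    assert (Hshort : ilen xs t l 1%nat < L) by (apply (HK0 l 1%nat Hl Hp1); lia).
    unfold ilen in *.
    set (tt := t l 1%nat) in *.
    destruct (xs_good f N r xi xt q p xs t HN Hr Hxi Hrun l Hl tt Htj) as (Hd'&Hb01&Ha01).
    assert (HcL : 0 <= (1 - / r) / 2 * (xs l tt - xs l (tt - 1)%nat)) by (apply Rmult_le_pos; lra).
    destruct (charR_bounds N r xi f (xs l) (q l) tt HN Hr Hxi Htj Hd') as [_ Hup].
    assert (Hmu : muj N xi f (xs l) (q l) tt <= C).
    { apply (muj_le_C f N H xi (xs l) (q l) tt HN Hxi Hh); auto.
      intros i Hi. apply (xs_good f N r xi xt q p xs t HN Hr Hxi Hrun l Hl i Hi). }
    pose proof (muj_ge_xi N xi f (xs l) (q l) tt).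
    assert (Hrd : rt N (xs l tt - xs l (tt - 1)%nat) <= E) by (apply HrtE; lra).
    pose proof (rt_ge0 N (xs l tt - xs l (tt - 1)%nat)).
    assert (r * muj N xi f (xs l) (q l) tt * rt N (xs l tt - xs l (tt - 1)%nat) <= r * C * E).
    { apply Rmult_le_compat. apply Rmult_le_pos; lra. auto. apply Rmult_le_compat_l; lra. auto. }
    assert (Hw01 : 0 <= xt (q l + 1)%nat <= 1) by (apply Hin; lia).
    assert (Ea : rt N (Rabs (xt (q l + 1)%nat - xs l (tt-1)%nat)) <= E).
    { apply HrtE. split. apply Rabs_pos. apply Rabs_le. lra. }
    assert (Eb : rt N (Rabs (xt (q l + 1)%nat - xs l tt)) <= E).
    { apply HrtE. split. apply Rabs_pos. apply Rabs_le. lra. }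
    pose proof (holder_near f N H _ _ E HN H0 Hh Hw01 Ha01 Ea) as Fa.
    pose proof (holder_near f N H _ _ E HN H0 Hh Hw01 Hb01 Eb) as Fb.
    assert (f (xt (q l + 1)%nat) <= Rmin (f (xs l tt)) (f (xs l (tt - 1)%nat)) + H * E).
    { unfold Rmin. destruct (Rle_dec _ _); lra. }
    unfold eps in *. nra. }

  set (nx := fun n => proj1_sig (constructive_indefinite_description _ (StepC n))).
  assert (Hnx : forall n, (n <= nx n)%nat /\ (1 <= nx n)%nat /\ f (xt (q (nx n) + 1)%nat) < fs + eps / 2).
  { intros n. unfold nx. destruct (constructive_indefinite_description _ (StepC n)); auto. }
  set (hs := fix hs m := match m with O => nx O | S m' => nx (S (hs m')) end).
  assert (Hs1 : forall m, (hs m < hs (S m))%nat).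
  { intros m. simpl. destruct (Hnx (S (hs m))). lia. }
  assert (Hsm : forall m m', (m < m')%nat -> (hs m < hs m')%nat).
  { intros m m' Hmm. induction Hmm. apply Hs1. pose proof (Hs1 m0). lia. }
  assert (Hgood : forall m, (1 <= hs m)%nat /\ f (xt (q (hs m) + 1)%nat) < fs + eps / 2).
  { intros m. destruct m; simpl; apply Hnx. }
  set (P := fun m => xt (q (hs m) + 1)%nat).
  assert (Hdist : forall m m', (m < m')%nat -> P m <> P m').
  { intros m m' Hmm Ee. pose proof (Hsm m m' Hmm).
    destruct (Hgood m) as [Hm1 _]. destruct (Hgood m') as [Hm1' _].
    destruct (q_succ _ _ _ _ _ _ _ _ _ Hrun (hs m') Hm1') as [_ Hp'].
    assert (Hp1 : (1 <= 1 <= p (S (hs m')))%nat) by lia.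
    pose proof (q_mono _ _ _ _ _ _ _ _ _ Hrun (hs m) (hs m') ltac:(lia)).
    pose proof (separation f N r xi xt q p xs t HN Hr Hxi Hrun (hs m') 1%nat (q (hs m) + 1)%nat Hm1' Hp1 ltac:(lia)) as Hsep.
    destruct (newpt_in f N r xi xt q p xs t HN Hr Hxi Hrun (hs m') 1%nat Hm1' Hp1) as (_&Hd&_).
    unfold P in Ee. rewrite Ee, Rminus_diag, Rabs_R0 in Hsep.
    assert (0 < (1 - / r) / 2 * ilen xs t (hs m') 1) by (apply Rmult_lt_0_compat; auto). lra. }
  destruct (StepA (S (hs Q))) as (ls&js&Hls&Hls1&Hjs&Rjs).
  pose proof Hrun as (_&_&_&_&Hall).
  destruct (Hall ls Hls1) as (Hs&Hex&Hex2&Hp&Ht&Hinj&Hord&Hmax&Hnew&_).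
  assert (HpQ : (p (S ls) <= Q)%nat) by (apply HQ; lia).
  assert (Hpig : (S Q <= p (S ls))%nat).
  { apply (pigeon (S Q) (p (S ls)) (fun m k => xs ls (t ls k) = P m)).
    - intros m Hm.
      destruct (Hgood m) as [Hm1 Hlow].
      destruct (q_succ _ _ _ _ _ _ _ _ _ Hrun (hs m) Hm1) as [Hqs Hp'].
      assert (Hp1 : (1 <= 1 <= p (S (hs m)))%nat) by lia.
      assert (Hle : (hs m <= hs Q)%nat) by (destruct (Nat.eq_dec m Q); [subst; lia|pose proof (Hsm m Q ltac:(lia)); lia]).
      pose proof (q_mono _ _ _ _ _ _ _ _ _ Hrun (S (hs m)) ls ltac:(lia)).
      destruct (Hex2 (q (hs m) + 1)%nat ltac:(lia)) as (i&Hi&Ei).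
      destruct (newpt_in f N r xi xt q p xs t HN Hr Hxi Hrun (hs m) 1%nat Hm1 Hp1) as (Htj&Hd&M1&_).
      pose proof (Hall (hs m) Hm1) as (_&Hexm&_).
      destruct (Hexm (t (hs m) 1%nat - 1)%nat ltac:(lia)) as (ka&Hka&Eka).
      pose proof (q_mono _ _ _ _ _ _ _ _ _ Hrun (hs m) ls ltac:(lia)).
      destruct (Hex2 ka ltac:(lia)) as (i'&Hi'&Ei').
      assert (Hc0 : 0 < (1 - / r) / 2 * ilen xs t (hs m) 1) by (apply Rmult_lt_0_compat; auto).
      assert (Hlt' : xs ls i' < xs ls i) by (rewrite Ei', Ei, <- Eka; lra).
      assert (Hi2 : (2 <= i)%nat).
      { destruct (Nat.le_gt_cases i 1); [|lia].
        pose proof (xs_le _ _ _ _ _ _ _ _ _ Hrun ls i i' Hls1 ltac:(lia) ltac:(lia) ltac:(lia)). lra. }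
      destruct (xs_good f N r xi xt q p xs t HN Hr Hxi Hrun ls Hls1 i ltac:(lia)) as (Hdi&_&_).
      destruct (charR_bounds N r xi f (xs ls) (q ls) i HN Hr Hxi ltac:(lia) Hdi) as [Hlo _].
      assert (Hmn : Rmin (f (xs ls i)) (f (xs ls (i - 1)%nat)) <= f (xs ls i)) by apply Rmin_l.
      assert (Hbig : theta < charR N r xi f (xs ls) (q ls) i).
      { assert (f (xs ls i) < fs + eps / 2) by (rewrite Ei; exact Hlow).
        unfold theta. lra. }
      destruct (classic (exists k, (1 <= k <= p (S ls))%nat /\ t ls k = i)) as [[k [Hk Ek]]|Hno].
      + exists k. split; auto. rewrite Ek, Ei. reflexivity.
      + exfalso. assert (charR N r xi f (xs ls) (q ls) i <= charR N r xi f (xs ls) (q ls) (t ls js)).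
        { apply Hmax; auto. lia. intros k' Hk' E'. apply Hno; eauto. }
        lra.
    - intros m m' k Hm Hm' E1 E2. rewrite E1 in E2.
      destruct (Nat.lt_total m m') as [Hlt2|[Heq|Hgt]]; auto.
      + exfalso; apply (Hdist m m' Hlt2); auto.
      + exfalso; apply (Hdist m' m Hgt); auto. }
  lia.
Qed.
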